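(* Let $S$ be a connected graded reduced affine monoid and $R$ a commutative ring with identity. Then $c_{\mathrm{gr}}(S)=\mu(\ker(\pi_R))$, where the polynomial ring $R[x_a\mid a\in\mathcal{A}(S)]$ is graded by $\deg x_a=|a|$, so that $\pi_R$ is a homomorphism of graded algebras.
   Context: A monoid is a commutative cancellative semigroup with identity; affine means a finitely generated submonoid of a finitely generated free abelian group; reduced means the identity is the only unit. $S$ is graded if $S=\bigsqcup_{d\in\mathbb{N}_0}S_d$ with $S_dS_e\subseteq S_{d+e}$; $|s|=d$ for $s\in S_d$; connected graded means $S_0=\{1\}$. $\mathcal{A}(S)$ is the finite set of atoms, $a^{\alpha}=\prod_a a^{\alpha(a)}$. $R[S]$ is the semigroup ring, graded by the grading of $S$, and $\pi_R:R[x_a\mid a\in\mathcal{A}(S)]\to R[S]$ is the $R$-algebra homomorphism $x^{\alpha}\mapsto a^{\alpha}$. For an ideal $I$ of the graded polynomial ring, $\mu(I)$ is the minimal non-negative integer $d$ such that $I$ is generated by elements of degree at most $d$. The graded catenary degree: set $|\alpha|_{\mathrm{gr}}=\sum_a\alpha(a)|a|$, $\gcd(\alpha,\gamma)(a)=\min\{\alpha(a),\gamma(a)\}$, $d_{\mathrm{gr}}(\alpha,\gamma)=\max\{|\alpha-\gcd(\alpha,\gamma)|_{\mathrm{gr}},|\gamma-\gcd(\alpha,\gamma)|_{\mathrm{gr}}\}$; $c_{\mathrm{gr}}(S)$ is the minimal $d$ such that whenever $a^{\alpha}=a^{\gamma}$ there is a sequence $\alpha=\alpha^{(0)},\dots,\alpha^{(k)}=\gamma$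 with $a^{\alpha^{(j)}}=a^{\alpha^{(j+1)}}$ and $d_{\mathrm{gr}}(\alpha^{(j)},\alpha^{(j+1)})\le d$ for all $j$. *)

(* Defs.v *)
From HB Require Import structures.
From mathcomp Require Import all_boot all_order all_algebra.
From mathcomp.multinomials Require Import mpoly.
Set Implicit Arguments. Unset Strict Implicit. Unset Printing Implicit Defensive.
Import Order.TTheory GRing.Theory Num.Theory.
Local Open Scope ring_scope.

(* A monoid S is modelled as a subset of the free abelian group Z^n = 'rV[int]_n. *)
Section Monoid.
Variable n : nat.
Implicit Types (S : 'rV[int]_n -> Prop) (x y : 'rV[int]_n).

Definition submonoid S := S 0 /\ (forall x y, S x -> S y -> S (x + y)).

Definition affine S := submonoid S /\
  exists (g : nat) (gen : 'I_g -> 'rV[int]_n),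
    forall x, S x <-> exists c : 'I_g -> nat, x = \sum_(i < g) (gen i) *+ c i.

Definition is_unit S x := S x /\ S (- x).

Definition reduced S := forall x, is_unit S x -> x = 0.

(* grading: S = disjoint union of S_d, d = deg x, with S_d S_e ⊆ S_{d+e} *)
Definition graded S (deg : 'rV[int]_n -> nat) :=
  forall x y, S x -> S y -> deg (x + y) = (deg x + deg y)%N.

Definition connected_graded S (deg : 'rV[int]_n -> nat) :=
  graded S deg /\ forall x, S x -> deg x = 0%N -> x = 0.

Definition is_atom S a := S a /\ ~ is_unit S a /\
  forall b c, S b -> S c -> a = b + c -> is_unit S b \/ is_unit S c.

Variables (deg : 'rV[int]_n -> nat) (k : nat) (atom : 'I_k -> 'rV[int]_n).

Definition fact_val (al : 'X_{1..k}) : 'rV[int]_n := \sum_(i < k) atom i *+ al i.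

Definition gr_size (al : 'X_{1..k}) : nat := (\sum_(i < k) al i * deg (atom i))%N.

Definition gr_diff (al ga : 'X_{1..k}) : nat :=
  (\sum_(i < k) (al i - minn (al i) (ga i)) * deg (atom i))%N.

Definition d_gr (al ga : 'X_{1..k}) : nat := maxn (gr_diff al ga) (gr_diff ga al).

Definition catenary_bound (d : nat) : Prop :=
  forall al ga : 'X_{1..k}, fact_val al = fact_val ga ->
    exists chain : seq 'X_{1..k},
      path (fun b c => (fact_val b == fact_val c) && (d_gr b c <= d)%N) al chain
      /\ last al chain = ga.

Definition is_cat_gr (d : nat) : Prop :=
  catenary_bound d /\ forall d', catenary_bound d' -> (d <= d')%N.

Variable R : comNzRingType.

(* pi_R : R[x_a] -> R[S]; an element of R[S] is represented by its coefficient
   function on S ⊆ Z^n (coefficient of the basis element s). *)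
Definition piR (f : {mpoly R[k]}) (s : 'rV[int]_n) : R :=
  \sum_(m <- msupp f | fact_val m == s) f@_m.

Definition ker_piR (f : {mpoly R[k]}) : Prop := forall s, piR f s = 0.

Definition homog_of (e : nat) (f : {mpoly R[k]}) : Prop :=
  forall m, m \in msupp f -> gr_size m = e.

Definition ideal_generated_by (I G : {mpoly R[k]} -> Prop) : Prop :=
  (forall g, G g -> I g) /\
  forall f, I f <-> exists s : seq ({mpoly R[k]} * {mpoly R[k]}),
      (forall p, p \in s -> G p.2) /\ f = \sum_(p <- s) p.1 * p.2.

Definition gen_deg_le (I : {mpoly R[k]} -> Prop) (d : nat) : Prop :=
  ideal_generated_by I (fun g => I g /\ exists e, (e <= d)%N /\ homog_of e g).

Definition is_mu (I : {mpoly R[k]} -> Prop) (d : nat) : Prop :=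
  gen_deg_le I d /\ forall d', gen_deg_le I d' -> (d <= d')%N.

End Monoid.

(* Main.v *)
Require Import Defs.
From HB Require Import structures.
From mathcomp Require Import all_boot all_order all_algebra.
From mathcomp.multinomials Require Import mpoly.
From mathcomp Require Import zify.
From Stdlib Require Import Classical ClassicalEpsilon.
Set Implicit Arguments. Unset Strict Implicit. Unset Printing Implicit Defensive.
Import Order.TTheory GRing.Theory Num.Theory.
Local Open Scope ring_scope.

Definition Phi (R : comNzRingType) (k : nat) (phi : 'X_{1..k} -> R) (f : {mpoly R[k]}) : R :=
  \sum_(m <- msupp f) phi m * f@_m.

Lemma Phi_supp (R : comNzRingType) k (phi : 'X_{1..k} -> R) f (r : seq 'X_{1..k}) :
  uniq r -> {subset msupp f <= r} -> Phi phi f = \sum_(m <- r) phi m * f@_m.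
Proof.
move=> ur sub; rewrite (bigID (mem (msupp f))) /= [X in _ + X]big1 ?addr0; last first.
  by move=> m; rewrite -mcoeff_eq0 => /eqP ->; rewrite mulr0.
rewrite -big_filter /Phi; apply: perm_big; apply: uniq_perm.
- exact: msupp_uniq.
- exact: filter_uniq.
by move=> m; rewrite mem_filter; case H: (m \in msupp f) => //=; rewrite (sub _ H).
Qed.

Lemma PhiD (R : comNzRingType) k (phi : 'X_{1..k} -> R) f g :
  Phi phi (f + g) = Phi phi f + Phi phi g.
Proof.
pose r := undup (msupp f ++ msupp g).
have ur : uniq r by exact: undup_uniq.
rewrite (@Phi_supp _ _ _ (f + g) r) //; last first.
  by move=> m /msuppD_le; rewrite mem_undup.
rewrite (@Phi_supp _ _ _ f r) //; last by move=> m H; rewrite mem_undup mem_cat H.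
rewrite (@Phi_supp _ _ _ g r) //; last by move=> m H; rewrite mem_undup mem_cat H orbT.
by rewrite -big_split /=; apply: eq_bigr => m _; rewrite mcoeffD mulrDr.
Qed.

Lemma Phi0 (R : comNzRingType) k (phi : 'X_{1..k} -> R) : Phi phi 0 = 0.
Proof.
rewrite (@Phi_supp _ _ _ 0 [::]) ?big_nil //.
by move=> m; rewrite mcoeff_msupp mcoeff0 eqxx.
Qed.

Lemma PhiZX (R : comNzRingType) k (phi : 'X_{1..k} -> R) c m :
  Phi phi (c *: 'X_[m]) = c * phi m.
Proof.
rewrite (@Phi_supp _ _ _ _ [:: m]) ?big_seq1 //.
  by rewrite mcoeffZ mcoeffX eqxx mulr1 mulrC.
move=> m'; rewrite mcoeff_msupp mcoeffZ mcoeffX inE.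
by case: (m == m') / eqP => [->|]; rewrite ?eqxx // mulr0 eqxx.
Qed.

Lemma Phi_sum (R : comNzRingType) k (phi : 'X_{1..k} -> R) (I : Type) (r : seq I) (F : I -> {mpoly R[k]}) :
  Phi phi (\sum_(i <- r) F i) = \sum_(i <- r) Phi phi (F i).
Proof. exact: (big_morph _ (PhiD phi) (Phi0 phi)). Qed.

Lemma PhiZ (R : comNzRingType) k (phi : 'X_{1..k} -> R) c f :
  Phi phi (c *: f) = c * Phi phi f.
Proof.
rewrite {1}(mpolyE f) scaler_sumr Phi_sum [in RHS]/Phi mulr_sumr.
by apply: eq_bigr => m _; rewrite scalerA PhiZX -mulrA (mulrC (f@_m)).
Qed.

Lemma PhiXM (R : comNzRingType) k (phi : 'X_{1..k} -> R) u g :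
  Phi phi ('X_[u] * g) = \sum_(m <- msupp g) phi (u + m)%MM * g@_m.
Proof.
rewrite {1}(mpolyE g) mulr_sumr Phi_sum; apply: eq_bigr => m _.
by rewrite -scalerAr -mpolyXD PhiZX mulrC.
Qed.

Lemma PhiM (R : comNzRingType) k (phi : 'X_{1..k} -> R) p g :
  Phi phi (p * g) = \sum_(u <- msupp p) p@_u * Phi phi ('X_[u] * g).
Proof.
rewrite {1}(mpolyE p) mulr_suml Phi_sum; apply: eq_bigr => u _.
by rewrite -scalerAl PhiZ.
Qed.

Lemma fact_valD n k (atom : 'I_k -> 'rV[int]_n) u m :
  fact_val atom (u + m)%MM = fact_val atom u + fact_val atom m.
Proof.
rewrite /fact_val -big_split /=; apply: eq_bigr => i _.
by rewrite mnmDE mulrnDr.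
Qed.

Lemma piR_Phi n k (atom : 'I_k -> 'rV[int]_n) (R : comNzRingType) (f : {mpoly R[k]}) s :
  piR atom f s = Phi (fun m => (fact_val atom m == s)%:R) f.
Proof.
rewrite /piR /Phi big_mkcond /=; apply: eq_bigr => m _.
by case: (_ == _); rewrite ?mul1r ?mul0r.
Qed.

Lemma ker_mul n k (atom : 'I_k -> 'rV[int]_n) (R : comNzRingType) (p f : {mpoly R[k]}) :
  ker_piR atom f -> ker_piR atom (p * f).
Proof.
move=> kf s; rewrite piR_Phi PhiM big1_seq // => u _.
rewrite PhiXM.
have -> : \sum_(m <- msupp f) (fact_val atom (u + m)%MM == s)%:R * f@_m
   = piR atom f (s - fact_val atom u).
  rewrite piR_Phi; apply: eq_bigr => m _; congr ((nat_of_bool _)%:R * _).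
  rewrite fact_valD; apply/idP/idP => /eqP H; apply/eqP; first by rewrite -H [_ + fact_val atom m]addrC addrK.
  by rewrite H addrC subrK.
by rewrite kf mulr0.
Qed.

Lemma ker_add n k (atom : 'I_k -> 'rV[int]_n) (R : comNzRingType) (f g : {mpoly R[k]}) :
  ker_piR atom f -> ker_piR atom g -> ker_piR atom (f + g).
Proof. by move=> kf kg s; rewrite piR_Phi PhiD -!piR_Phi kf kg addr0. Qed.

Lemma ker_sum n k (atom : 'I_k -> 'rV[int]_n) (R : comNzRingType) (I : eqType) (r : seq I) (F : I -> {mpoly R[k]}) :
  (forall i, i \in r -> ker_piR atom (F i)) -> ker_piR atom (\sum_(i <- r) F i).
Proof.
elim: r => [|i r IH] H; first by move=> s; rewrite big_nil piR_Phi Phi0.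
rewrite big_cons; apply: ker_add; first by apply: H; rewrite inE eqxx.
by apply: IH => j Hj; apply: H; rewrite inE Hj orbT.
Qed.

Lemma binomE (R : comNzRingType) k (u v : 'X_{1..k}) :
  'X_[u] - 'X_[v] = 1 *: 'X_[u] + (-1) *: 'X_[v] :> {mpoly R[k]}.
Proof. by rewrite scale1r scaleN1r. Qed.

Lemma ker_binom n k (atom : 'I_k -> 'rV[int]_n) (R : comNzRingType) u v :
  fact_val atom u = fact_val atom v -> ker_piR atom ('X_[u] - 'X_[v] : {mpoly R[k]}).
Proof.
move=> e s; rewrite piR_Phi binomE PhiD !PhiZX e.
by rewrite mul1r mulN1r subrr.
Qed.

Definition mmin k (b c : 'X_{1..k}) : 'X_{1..k} := [multinom minn (b i) (c i) | i < k].

Lemma mminK k (b c : 'X_{1..k}) : b = (mmin b c + (b - mmin b c))%MM.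
Proof.
apply/mnmP => i; rewrite mnmDE mnmBE /mmin mnmE subnKC //.
exact: geq_minl.
Qed.

Lemma mminC k (b c : 'X_{1..k}) : mmin b c = mmin c b.
Proof. by apply/mnmP => i; rewrite /mmin !mnmE minnC. Qed.

Lemma gr_sizeD n (deg : 'rV[int]_n -> nat) k (atom : 'I_k -> 'rV[int]_n) u m :
  gr_size deg atom (u + m)%MM = (gr_size deg atom u + gr_size deg atom m)%N.
Proof.
rewrite /gr_size -big_split /=; apply: eq_bigr => i _.
by rewrite mnmDE mulnDl.
Qed.

Lemma gr_diffE n (deg : 'rV[int]_n -> nat) k (atom : 'I_k -> 'rV[int]_n) b c :
  gr_diff deg atom b c = gr_size deg atom (b - mmin b c)%MM.
Proof. by apply: eq_bigr => i _; rewrite mnmBE /mmin mnmE. Qed.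

Lemma gr_diff_shift n (deg : 'rV[int]_n -> nat) k (atom : 'I_k -> 'rV[int]_n) u b c :
  gr_diff deg atom (u + b)%MM (u + c)%MM = gr_diff deg atom b c.
Proof.
apply: eq_bigr => i _; rewrite !mnmDE; congr (_ * _)%N.
by rewrite -addn_minr subnDl.
Qed.

Lemma d_gr_shift n (deg : 'rV[int]_n -> nat) k (atom : 'I_k -> 'rV[int]_n) u b c :
  d_gr deg atom (u + b)%MM (u + c)%MM = d_gr deg atom b c.
Proof. by rewrite /d_gr !gr_diff_shift. Qed.

Lemma gr_diff_le n (deg : 'rV[int]_n -> nat) k (atom : 'I_k -> 'rV[int]_n) b c :
  (gr_diff deg atom b c <= gr_size deg atom b)%N.
Proof. by apply: leq_sum => i _; rewrite leq_mul2r leq_subr orbT. Qed.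

Lemma d_gr_le n (deg : 'rV[int]_n -> nat) k (atom : 'I_k -> 'rV[int]_n) b c :
  (d_gr deg atom b c <= maxn (gr_size deg atom b) (gr_size deg atom c))%N.
Proof.
rewrite /d_gr geq_max !leq_max !gr_diff_le /=.
by rewrite orbT.
Qed.

Lemma d_grC n (deg : 'rV[int]_n -> nat) k (atom : 'I_k -> 'rV[int]_n) b c :
  d_gr deg atom b c = d_gr deg atom c b.
Proof. by rewrite /d_gr maxnC. Qed.

Local Close Scope ring_scope.

Lemma min_exists (P : nat -> Prop) D : P D -> exists d, P d /\ forall d', P d' -> (d <= d')%N.
Proof.
elim: D {-2}D (leqnn D) => [|N IH] D leD PD.
  exists D; split => // d' _; by move: leD; rewrite leqn0 => /eqP ->.
case: (classic (exists d', (d' < D)%N /\ P d')) => [[d' [lt Pd']]|no].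
  apply: (IH d') => //; rewrite -ltnS; exact: leq_trans lt leD.
exists D; split => // d' Pd'; rewrite leqNgt; apply/negP => lt.
by apply: no; exists d'.
Qed.

Lemma collect (X A : eqType) (P : X -> Prop) (Q : A -> X -> Prop) (le : X -> X -> Prop) (s : seq A) :
 (forall q, q \in s -> exists L : seq X, (forall y, y \in L -> P y) /\
     forall x, P x -> Q q x -> exists2 y, y \in L & le y x) ->
 exists L : seq X, (forall y, y \in L -> P y) /\
     forall q, q \in s -> forall x, P x -> Q q x -> exists2 y, y \in L & le y x.
Proof.
elim: s => [|q s IH] H.
  by exists [::]; split => // q; rewrite in_nil.
have [L1 [HL1 cov1]] := H q (mem_head _ _).
have [L2 [HL2 cov2]] : exists L : seq X, (forall y, y \in L -> P y) /\
     forall q, q \in s -> forall x, P x -> Q q x -> exists2 y, y \in L & le y x.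
  by apply: IH => q' Hq'; apply: H; rewrite inE Hq' orbT.
exists (L1 ++ L2); split.
  by move=> y; rewrite mem_cat => /orP [/HL1|/HL2].
move=> q'; rewrite inE => /orP [/eqP ->|Hq'] x Px Qx.
  by have [y yL ley] := cov1 x Px Qx; exists y => //; rewrite mem_cat yL.
by have [y yL ley] := cov2 q' Hq' x Px Qx; exists y => //; rewrite mem_cat yL orbT.
Qed.

Lemma dickson (T : finType) (m : nat) (J : {set T}) (P : {ffun T -> nat} -> Prop) :
  (#|J| <= m)%N -> (forall x y, P x -> P y -> forall t, t \notin J -> x t = y t) ->
  exists L : seq {ffun T -> nat}, (forall y, y \in L -> P y) /\
    (forall x, P x -> exists2 y, y \in L & forall t, (y t <= x t)%N).
Proof.
elim: m J P => [|m IH] J P cJ cst.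
  case: (classic (exists x, P x)) => [[x0 Px0]|no]; last first.
    by exists [::]; split => // x Px; case: no; exists x.
  exists [:: x0]; split; first by move=> y; rewrite inE => /eqP ->.
  move=> x Px; exists x0; first by rewrite inE.
  move=> t; rewrite (cst x0 x) //.
  by move: cJ; rewrite leqn0 cards_eq0 => /eqP ->; rewrite inE.
case: (classic (exists x, P x)) => [[p0 Pp0]|no]; last first.
  by exists [::]; split => // x Px; case: no; exists x.
pose N := (\max_(t : T) p0 t)%N.
pose s := [seq q <- enum {: T * 'I_N} | q.1 \in J].
case: (@collect _ _ P (fun q x => x q.1 = val q.2)
   (fun y x => forall t, (y t <= x t)%N) s) => [|Lc [HLc covc]].
  move=> q; rewrite mem_filter => /andP [qJ _].
  case: (IH (J :\ q.1) (fun x => P x /\ x q.1 = val q.2)) => [||L [HL cov]].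
  - by move: cJ; rewrite (cardsD1 q.1) qJ add1n ltnS.
  - move=> x y [Px xq] [Py yq] t; rewrite in_setD1 negb_and negbK.
    case/orP => [/eqP ->|tJ]; first by rewrite xq yq.
    exact: cst.
  exists L; split; first by move=> y /HL [].
  by move=> x Px Qx; apply: cov.
exists (p0 :: Lc); split.
  by move=> y; rewrite inE => /orP [/eqP ->|/HLc].
move=> x Px.
case: (classic (forall t, (p0 t <= x t)%N)) => [le|nle].
  by exists p0 => //; rewrite mem_head.
have [t lt] := not_all_ex_not _ _ nle.
have ltx : (x t < p0 t)%N by rewrite ltnNge; apply/negP.
have tJ : t \in J.
  apply/negPn/negP => tJ; by move: (ltx); rewrite (cst x p0) // ltnn.
have xN : (x t < N)%N.
  apply: (leq_trans ltx); exact: (leq_bigmax t).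
have qs : (t, Ordinal xN) \in s by rewrite mem_filter /= tJ mem_enum.
have [y yL ley] := covc (t, Ordinal xN) qs x Px erefl.
by exists y => //; rewrite inE yL orbT.
Qed.

Local Open Scope ring_scope.

Definition crel n (deg : 'rV[int]_n -> nat) k (atom : 'I_k -> 'rV[int]_n) (d : nat) :=
  fun b c : 'X_{1..k} => (fact_val atom b == fact_val atom c) && (d_gr deg atom b c <= d)%N.

Lemma crel_shift n (deg : 'rV[int]_n -> nat) k (atom : 'I_k -> 'rV[int]_n) d u b c :
  crel deg atom d (u + b)%MM (u + c)%MM = crel deg atom d b c.
Proof. by rewrite /crel !fact_valD d_gr_shift (inj_eq (addrI _)). Qed.

Lemma path_shift n (deg : 'rV[int]_n -> nat) k (atom : 'I_k -> 'rV[int]_n) d u x s :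
  path (crel deg atom d) x s ->
  path (crel deg atom d) (u + x)%MM (map (fun y => (u + y)%MM) s).
Proof.
rewrite path_map; apply: sub_path => b c /=; by rewrite crel_shift.
Qed.

Definition dec1 k (y : {ffun bool * 'I_k -> nat}) : 'X_{1..k} := [multinom y (true, i) | i < k].
Definition dec2 k (y : {ffun bool * 'I_k -> nat}) : 'X_{1..k} := [multinom y (false, i) | i < k].
Definition enc k (a c : 'X_{1..k}) : {ffun bool * 'I_k -> nat} :=
  [ffun t => if t.1 then a t.2 else c t.2].

Lemma dec1_enc k (a c : 'X_{1..k}) : dec1 (enc a c) = a.
Proof. by apply/mnmP => i; rewrite /dec1 mnmE ffunE. Qed.
Lemma dec2_enc k (a c : 'X_{1..k}) : dec2 (enc a c) = c.
Proof. by apply/mnmP => i; rewrite /dec2 mnmE ffunE. Qed.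

Lemma cat_exists n (deg : 'rV[int]_n -> nat) k (atom : 'I_k -> 'rV[int]_n) :
  exists D, catenary_bound deg atom D.
Proof.
pose P (y : {ffun bool * 'I_k -> nat}) :=
  fact_val atom (dec1 y) = fact_val atom (dec2 y) /\ dec1 y != dec2 y.
have cstP : forall x y, P x -> P y -> forall t, t \notin [set: bool * 'I_k] -> x t = y t.
  by move=> x y _ _ t; rewrite inE.
have [L [HL cov]] := @dickson _ #|[set: bool * 'I_k]| setT P (leqnn _) cstP.
pose D := (\max_(y <- L) d_gr deg atom (dec1 y) (dec2 y))%N.
exists D.
suff main : forall N (a c : 'X_{1..k}), (mdeg a + mdeg c <= N)%N ->
    fact_val atom a = fact_val atom c ->
    exists chain, path (crel deg atom D) a chain /\ last a chain = c.
  by move=> a c e; apply: (main _ a c (leqnn _) e).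
elim => [|N IH] a c.
  move=> H _; exists [::]; split => //=.
  have a0 : mdeg a == 0%N by lia.
  have c0 : mdeg c == 0%N by lia.
  by move: a0 c0; rewrite !mdeg_eq0 => /eqP -> /eqP ->.
move=> sz e.
case: (eqVneq a c) => [->|ne]; first by exists [::].
have Pe : P (enc a c) by rewrite /P dec1_enc dec2_enc.
have [y yL ley] := cov _ Pe.
have [ey ney] := HL y yL.
set b1 := dec1 y in ey ney; set b2 := dec2 y in ey ney.
have le1 : forall i, (b1 i <= a i)%N.
  by move=> i; move: (ley (true, i)); rewrite ffunE /b1 /dec1 mnmE.
have le2 : forall i, (b2 i <= c i)%N.
  by move=> i; move: (ley (false, i)); rewrite ffunE /b2 /dec2 mnmE.
pose a2 := (a - b1)%MM; pose c2 := (c - b2)%MM.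
have ea : a = (a2 + b1)%MM by apply/mnmP => i; rewrite mnmDE mnmBE subnK.
have ec : c = (b2 + c2)%MM by apply/mnmP => i; rewrite mnmDE mnmBE subnKC.
have e2 : fact_val atom a2 = fact_val atom c2.
  move: e; rewrite ea ec !fact_valD ey [fact_val atom b2 + _]addrC.
  exact: addIr.
have pos : (0 < mdeg b1 + mdeg b2)%N.
  rewrite lt0n; apply/negP; rewrite -mdegD mdeg_eq0 mnmD_eq0 => /andP [/eqP h1 /eqP h2].
  by move: ney; rewrite h1 h2 eqxx.
have sz2 : (mdeg a2 + mdeg c2 <= N)%N.
  move: sz pos; rewrite {1}ea {1}ec !mdegD; lia.
have [ch [pch lch]] := IH a2 c2 sz2 e2.
exists ((b2 + a2)%MM :: map (fun x => (b2 + x)%MM) ch); split.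
  rewrite /= path_shift // andbT.
  rewrite ea [(b2 + a2)%MM]addmC crel_shift /crel ey eqxx /=.
  exact: (leq_bigmax_seq _ yL).
by rewrite /= last_map lch ec.
Qed.


Lemma gr_deg n (S : 'rV[int]_n -> Prop) (deg : 'rV[int]_n -> nat) k (atom : 'I_k -> 'rV[int]_n) :
  submonoid S -> graded S deg -> (forall i, S (atom i)) ->
  forall m, S (fact_val atom m) /\ deg (fact_val atom m) = gr_size deg atom m.
Proof.
move=> [S0 SD] gr Sa m.
have deg0 : deg 0 = 0%N.
  by have := gr 0 0 S0 S0; rewrite addr0; lia.
have mn : forall a j, S a -> S (a *+ j) /\ deg (a *+ j) = (j * deg a)%N.
  move=> a j Sa'; elim: j => [|j [IHS IHd]]; first by rewrite mulr0n.
  rewrite mulrS; split; first exact: SD.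
  by rewrite gr // IHd mulSn.
rewrite /fact_val /gr_size; elim: (index_enum _) => [|i r [IHS IHd]].
  by rewrite !big_nil.
rewrite !big_cons; have [h1 h2] := mn (atom i) (m i) (Sa i).
by split; [apply: SD | rewrite gr // h2 IHd].
Qed.

Lemma msupp_binom k (R : comNzRingType) (u v m : 'X_{1..k}) :
  m \in msupp ('X_[u] - 'X_[v] : {mpoly R[k]}) -> m = u \/ m = v.
Proof.
rewrite mcoeff_msupp mcoeffB !mcoeffX.
have [->|nu] := eqVneq u m; first by left.
have [->|nv] := eqVneq v m; first by right.
by rewrite subrr eqxx.
Qed.

Definition Gd n (deg : 'rV[int]_n -> nat) k (atom : 'I_k -> 'rV[int]_n) (R : comNzRingType) d :=
  fun g : {mpoly R[k]} => ker_piR atom g /\ exists e, (e <= d)%N /\ homog_of deg atom e g.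

Lemma binom_G n (deg : 'rV[int]_n -> nat) k (atom : 'I_k -> 'rV[int]_n) (R : comNzRingType) d a b :
  (forall m, deg (fact_val atom m) = gr_size deg atom m) ->
  crel deg atom d a b ->
  Gd deg atom d ('X_[(a - mmin a b)%MM] - 'X_[(b - mmin a b)%MM] : {mpoly R[k]}).
Proof.
move=> HS /andP [/eqP e le].
have e2 : fact_val atom (a - mmin a b)%MM = fact_val atom (b - mmin a b)%MM.
  have eb := mminK b a; rewrite mminC in eb.
  have : fact_val atom (mmin a b + (a - mmin a b))%MM =
         fact_val atom (mmin a b + (b - mmin a b))%MM by rewrite -mminK -eb.
  rewrite !fact_valD; exact: addrI.
split; first exact: ker_binom.
exists (gr_size deg atom (a - mmin a b)%MM); split.
  rewrite -gr_diffE; apply: leq_trans le; exact: leq_maxl.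
move=> m /msupp_binom [->|->] //.
by rewrite -!HS e2.
Qed.

Lemma binom_split k (R : comNzRingType) (a b : 'X_{1..k}) :
  ('X_[a] - 'X_[b] : {mpoly R[k]}) =
  'X_[mmin a b] * ('X_[(a - mmin a b)%MM] - 'X_[(b - mmin a b)%MM]).
Proof.
rewrite mulrBr -!mpolyXD -mminK; congr (_ - _).
by rewrite mminC -mminK.
Qed.

Lemma binom_chain n (deg : 'rV[int]_n -> nat) k (atom : 'I_k -> 'rV[int]_n) (R : comNzRingType) d :
  (forall m, deg (fact_val atom m) = gr_size deg atom m) ->
  forall ch a, path (crel deg atom d) a ch ->
  exists s : seq ({mpoly R[k]} * {mpoly R[k]}),
    (forall p, p \in s -> Gd deg atom d p.2) /\
    'X_[a] - 'X_[last a ch] = \sum_(p <- s) p.1 * p.2.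
Proof.
move=> HS; elim => [|b ch IH] a /=.
  by move=> _; exists [::]; rewrite big_nil subrr.
move=> /andP [rab pch]; have [s [Gs es]] := IH b pch.
exists (('X_[mmin a b], 'X_[(a - mmin a b)%MM] - 'X_[(b - mmin a b)%MM]) :: s); split.
  move=> p; rewrite inE => /orP [/eqP -> /=|]; last exact: Gs.
  exact: binom_G.
rewrite big_cons /= -es -binom_split.
by rewrite addrA subrK.
Qed.

Lemma ker_gen n (deg : 'rV[int]_n -> nat) k (atom : 'I_k -> 'rV[int]_n) (R : comNzRingType) d :
  (forall m, deg (fact_val atom m) = gr_size deg atom m) ->
  catenary_bound deg atom d ->
  forall f : {mpoly R[k]}, ker_piR atom f ->
  exists s : seq ({mpoly R[k]} * {mpoly R[k]}),
    (forall p, p \in s -> Gd deg atom d p.2) /\ f = \sum_(p <- s) p.1 * p.2.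
Proof.
move=> HS cb.
suff H : forall N (f : {mpoly R[k]}), (size (msupp f) <= N)%N -> ker_piR atom f ->
  exists s : seq ({mpoly R[k]} * {mpoly R[k]}),
    (forall p, p \in s -> Gd deg atom d p.2) /\ f = \sum_(p <- s) p.1 * p.2.
  by move=> f; apply: (H _ f (leqnn _)).
have nil_case : forall f : {mpoly R[k]}, msupp f = [::] ->
  exists s : seq ({mpoly R[k]} * {mpoly R[k]}),
    (forall p, p \in s -> Gd deg atom d p.2) /\ f = \sum_(p <- s) p.1 * p.2.
  move=> f E; exists [::]; split => //.
  by rewrite big_nil (mpolyE f) E big_nil.
elim => [|N IH] f.
  by move=> sz _; apply: nil_case; move: sz; rewrite leqn0 size_eq0 => /eqP.
move=> sz kf.
case E: (msupp f) => [|m r]; first exact: nil_case.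
have min : m \in msupp f by rewrite E mem_head.
have cm : f@_m != 0 by rewrite -mcoeff_msupp.
have [m' [m'in [ne ev]]] : exists m', m' \in msupp f /\ m' != m /\ fact_val atom m' = fact_val atom m.
  apply: NNPP => no; move: cm; have := kf (fact_val atom m).
  rewrite /piR big_mkcond (bigD1_seq m) ?msupp_uniq //= big1_seq ?addr0.
    by case: eqP => // _ ->; rewrite eqxx.
  move=> x /andP [xm xin]; case: eqP => // exv; case: no; exists x; split => //.
pose B : {mpoly R[k]} := 'X_[m] - 'X_[m'].
pose f' := f + (- (f@_m)%:MP) * B.
have kf' : ker_piR atom f'.
  apply: ker_add => //; apply: ker_mul; exact: ker_binom.
have cf' : forall x, f'@_x = f@_x - f@_m * ((m == x)%:R - (m' == x)%:R).
  by move=> x; rewrite mcoeffD mulNr mcoeffN mul_mpolyC mcoeffZ mcoeffB !mcoeffX.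
have sub' : {subset msupp f' <= rem m (msupp f)}.
  move=> x; rewrite (mem_rem_uniq _ (msupp_uniq f)) inE mcoeff_msupp cf'.
  have [->|xm] := eqVneq x m.
    by rewrite (negbTE ne) subr0 mulr1 subrr eqxx.
  have [xin|xnin] := boolP (x \in msupp f); first by rewrite andbT.
  have [exm'|nxm'] := eqVneq m' x; first by move: xnin; rewrite -exm' m'in.
  move: xnin; rewrite mcoeff_msupp negbK => /eqP ->.
  by rewrite subrr mulr0 subrr eqxx.
have sz' : (size (msupp f') <= N)%N.
  apply: leq_trans (uniq_leq_size (msupp_uniq f') sub') _.
  by rewrite size_rem // -ltnS (leq_trans _ sz) // prednK // E.
have [s' [Gs' es']] := IH f' sz' kf'.
have [ch [pch lch]] := cb m m' (esym ev).
have [sb [Gsb esb]] := binom_chain R HS pch.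
rewrite lch in esb.
exists (s' ++ map (fun p => ((f@_m)%:MP * p.1, p.2)) sb); split.
  move=> p; rewrite mem_cat => /orP [/Gs'//|/mapP [q qin ->]] /=.
  exact: Gsb.
rewrite big_cat big_map /= -es'.
have -> : \sum_(p <- sb) (f@_m)%:MP * p.1 * p.2 = (f@_m)%:MP * B.
  by rewrite /B esb mulr_sumr; apply: eq_bigr => p _; rewrite mulrA.
by rewrite /f' mulNr subrK.
Qed.

Definition pd (R : comNzRingType) (P : Prop) : R :=
  if excluded_middle_informative P then 1 else 0.

Lemma pd_ext (R : comNzRingType) (P Q : Prop) : (P <-> Q) -> pd R P = pd R Q.
Proof.
move=> [PQ QP]; rewrite /pd.
case: (excluded_middle_informative P); case: (excluded_middle_informative Q) => //.
- by move=> nq p; case: nq; apply: PQ.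
- by move=> q np; case: np; apply: QP.
Qed.

Lemma pdT (R : comNzRingType) (P : Prop) : P -> pd R P = 1.
Proof. by rewrite /pd; case: (excluded_middle_informative P). Qed.
Lemma pdF (R : comNzRingType) (P : Prop) : ~ P -> pd R P = 0.
Proof. by rewrite /pd; case: (excluded_middle_informative P). Qed.

Lemma cat_from_gen n (deg : 'rV[int]_n -> nat) k (atom : 'I_k -> 'rV[int]_n) (R : comNzRingType) d :
  gen_deg_le deg atom (@ker_piR n k atom R) d -> catenary_bound deg atom d.
Proof.
move=> [GI gen] al ga e; apply: NNPP => nochain.
pose Cm x := exists ch, path (crel deg atom d) al ch /\ last al ch = x.
pose phi x := pd R (Cm x).
have Cal : Cm al by exists [::].
have nCga : ~ Cm ga by move=> [ch [p l]]; apply: nochain; exists ch.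
have clos : forall x y, Cm x -> crel deg atom d x y -> Cm y.
  move=> x y [ch [p l]] r; exists (rcons ch y); split; last by rewrite last_rcons.
  by rewrite rcons_path p l.
have key : forall g : {mpoly R[k]}, (ker_piR atom g /\ exists e, (e <= d)%N /\ homog_of deg atom e g) ->
    forall u, Phi phi ('X_[u] * g) = 0.
  move=> g [kg [e0 [le hom]]] u.
  rewrite PhiXM.
  set s := msupp g.
  pose V := undup (map (fact_val atom) s).
  pose phi' t := pd R (exists m, m \in s /\ fact_val atom m = t /\ Cm (u + m)%MM).
  have aon : forall m, m \in s -> phi (u + m)%MM = phi' (fact_val atom m).
    move=> m ms; apply: pd_ext; split; first by move=> c; exists m.
    move=> [m0 [m0s [ev c0]]]; apply: (clos _ _ c0).
    rewrite crel_shift /crel ev eqxx /=.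
    apply: leq_trans (d_gr_le _ _ _ _) _.
    by rewrite (hom _ m0s) (hom _ ms) maxnn.
  transitivity (\sum_(m <- s) \sum_(t <- V) (if fact_val atom m == t then phi' t * g@_m else 0)).
    rewrite big_seq_cond [RHS]big_seq_cond; apply: eq_bigr => m /andP [ms _].
    rewrite (bigD1_seq (fact_val atom m)) ?undup_uniq //; last first.
      by rewrite mem_undup map_f.
    rewrite /= eqxx big1 ?aon ?addr0 // => t; rewrite eq_sym => /negbTE ->.
    done.
  rewrite exchange_big /=; apply: big1 => t _.
  have := kg t; rewrite /piR big_mkcond /= => H.
  transitivity (phi' t * \sum_(m <- s) (if fact_val atom m == t then g@_m else 0)).
    rewrite mulr_sumr; apply: eq_bigr => m _; by case: ifP; rewrite ?mulr0.
  by rewrite H mulr0.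
have [s [Gs es]] := (gen ('X_[al] - 'X_[ga])).1 (ker_binom _ e).
have : Phi phi ('X_[al] - 'X_[ga]) = Phi phi (\sum_(p <- s) p.1 * p.2) by rewrite -es.
rewrite binomE PhiD !PhiZX Phi_sum big1_seq.
  by rewrite /phi (pdT R Cal) (pdF R nCga) mulr0 addr0 mul1r => /eqP; rewrite oner_eq0.
move=> p /andP [_ ps]; rewrite PhiM big1 // => u _.
by rewrite key ?mulr0 //; apply: Gs.
Qed.

Theorem corollary3p3 (n : nat) (S : 'rV[int]_n -> Prop) (deg : 'rV[int]_n -> nat)
    (k : nat) (atom : 'I_k -> 'rV[int]_n) (R : comNzRingType) :
  affine S -> reduced S -> connected_graded S deg ->
  injective atom -> (forall a, is_atom S a <-> exists i, a = atom i) ->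
  exists d : nat, is_cat_gr deg atom d /\ is_mu deg atom (@ker_piR n k atom R) d.
Proof.
move=> HA _ Hcon _ Hat.
have Sa : forall i, S (atom i).
  by move=> i; have [] := (Hat (atom i)).2 (ex_intro _ i erefl).
have HS : forall m, deg (fact_val atom m) = gr_size deg atom m.
  by move=> m; have [] := gr_deg HA.1 Hcon.1 Sa m.
have [D cbD] := cat_exists deg atom.
have [d [cbd mind]] := min_exists cbD.
exists d; split; first by split.
split.
  split; first by move=> g [].
  move=> f; split.
    move=> kf; have [s [Gs es]] := ker_gen HS cbd kf.
    by exists s; split => // p /Gs.
  move=> [s [Gs ->]]; apply: ker_sum => p ps; apply: ker_mul.
  by have [] := Gs p ps.
by move=> d' gd'; apply: mind; exact: cat_from_gen gd'.
Qed.
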